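(* Let $n\ge 2$ and let $(\mathcal V,[\cdot,\cdots,\cdot],S)$ be a generalized metric $n$-Leibniz algebra. Then for all $v_1,\dots,v_n\in\mathcal V$, $$\sum_{i=1}^{n-1}[v_i,v_1,\dots,v_{i-1},\widehat{v_i},v_{i+1},\dots,v_{n-1},v_n]=0,$$ where $\widehat{v_i}$ means that $v_i$ is omitted (so the $i$-th summand is the bracket whose first entry is $v_i$, followed by $v_1,\dots,v_{n-1}$ with $v_i$ removed, followed by $v_n$).
   Context: All vector spaces are finite-dimensional over $\mathbb R$. An $n$-Leibniz algebra is a vector space $\mathcal V$ with an $n$-linear map $[\cdot,\cdots,\cdot]:\mathcal V^{\times n}\to\mathcal V$ satisfying the fundamental identity $[u_1,\dots,u_{n-1},[v_1,\dots,v_n]]=\sum_{i=1}^n[v_1,\dots,v_{i-1},[u_1,\dots,u_{n-1},v_i],v_{i+1},\dots,v_n]$ for all $u_j,v_i\in\mathcal V$. For $S\in\mathrm{Sym}^{n-1}(\mathcal V^* )$ (a symmetric $(n-1)$-linear form on $\mathcal V$), $S$ is non-degenerate if the map $S^\sharp:\mathcal V\to\mathrm{Sym}^{n-2}(\mathcal V^* )$, $S^\sharp(u)(v_1,\dots,v_{n-2})=S(u,v_1,\dots,v_{n-2})$, is injective. A generalized metric $n$-Leibniz algebra is an $n$-Leibniz algebra $(\mathcal V,[\cdot,\cdots,\cdot])$ with a symmetric non-degenerate $S\in\mathrm{Sym}^{n-1}(\mathcal V^* )$ such that for all $u_1,\dots,u_{n-1},v_1,\dots,v_{n-1}\in\mathcal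 V$: (a) (unitarity) $\sum_{i=1}^{n-1}S(v_1,\dots,v_{i-1},[u_1,\dots,u_{n-1},v_i],v_{i+1},\dots,v_{n-1})=0$; (b) (symmetry) $S([u_1,\dots,u_{n-1},v_1],v_2,\dots,v_{n-1})=S([v_1,\dots,v_{n-1},u_1],u_2,\dots,u_{n-1})$. *)

(* Defs.v *)
From HB Require Import structures.
From mathcomp Require Import all_boot all_order all_algebra all_fingroup.
Set Implicit Arguments. Unset Strict Implicit. Unset Printing Implicit Defensive.
Import Order.TTheory GRing.Theory Num.Theory.
Local Open Scope ring_scope.

Section GML.
Variables (R : realFieldType) (V : vectType R) (n : nat).

Definition upd (k : nat) (f : {ffun 'I_k -> V}) (i : 'I_k) (x : V) :
  {ffun 'I_k -> V} := [ffun j => if j == i then x else f j].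

Definition multilinear (k : nat) (W : lmodType R) (F : {ffun 'I_k -> V} -> W) :=
  forall (f : {ffun 'I_k -> V}) (i : 'I_k) (a : R) (x y : V),
    F (upd f i (a *: x + y)) = a *: F (upd f i x) + F (upd f i y).

Variables (br : {ffun 'I_n -> V} -> V) (S : {ffun 'I_n.-1 -> V} -> R^o).

Definition br_of (g : nat -> V) : V := br [ffun j : 'I_n => g (val j)].
Definition S_of (g : nat -> V) : R := S [ffun j : 'I_n.-1 => g (val j)].

Definition brU (u : nat -> V) (x : V) : V :=
  br_of (fun j => if (j < n.-1)%N then u j else x).

Definition fundamental_identity :=
  forall (u v : nat -> V),
    brU u (br_of v) =
    \sum_(i < n) br_of (fun j => if j == val i then brU u (v (val i)) else v j).

Definition S_symmetric :=
  forall (f : {ffun 'I_n.-1 -> V}) (s : {perm 'I_n.-1}), S [ffun j => f (s j)] = S f.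

(* S^sharp : V -> Sym^{n-2}(dual V) is injective *)
Definition S_nondegenerate :=
  forall u u' : V,
    (forall w : nat -> V,
        S_of (fun j => if j == 0%N then u else w j) =
        S_of (fun j => if j == 0%N then u' else w j)) -> u = u'.

Definition S_unitarity :=
  forall (u v : nat -> V),
    \sum_(i < n.-1) S_of (fun j => if j == val i then brU u (v (val i)) else v j) = 0.

Definition S_symmetry :=
  forall (u v : nat -> V),
    S_of (fun j => if j == 0%N then brU u (v 0%N) else v j) =
    S_of (fun j => if j == 0%N then brU v (u 0%N) else u j).

Definition generalized_metric_nLeibniz : Prop :=
  multilinear br /\ fundamental_identity /\ multilinear S /\ S_symmetric /\
  S_nondegenerate /\ S_unitarity /\ S_symmetry.

End GML.

(* Main.v *)
Require Import Defs.
From HB Require Import structures.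
From mathcomp Require Import all_boot all_order all_algebra all_fingroup.
From mathcomp Require Import zify.
Import Order.TTheory GRing.Theory Num.Theory.
Local Open Scope ring_scope.
Set Implicit Arguments. Unset Strict Implicit.

Section H.
Variables (R : realFieldType) (V : vectType R).

Lemma ml_add k (W : lmodType R) (F : {ffun 'I_k -> V} -> W) (hF : multilinear F) f i x y :
  F (upd f i (x + y)) = F (upd f i x) + F (upd f i y).
Proof. by rewrite -[x in x + y]scale1r hF scale1r. Qed.

Lemma ml_zero k (W : lmodType R) (F : {ffun 'I_k -> V} -> W) (hF : multilinear F) f i :
  F (upd f i 0) = 0.
Proof.
have := hF f i (-1) 0 0; rewrite scaler0 addr0 scaleN1r => ->.
by rewrite addNr.
Qed.

Lemma ml_sum k (W : lmodType R) (F : {ffun 'I_k -> V} -> W) (hF : multilinear F) f i N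
  (x : 'I_N -> V) :
  F (upd f i (\sum_(l < N) x l)) = \sum_(l < N) F (upd f i (x l)).
Proof.
exact: (big_morph (fun y => F (upd f i y)) (ml_add hF f i) (ml_zero hF f i)).
Qed.
End H.

Lemma sn_lt (i j m : nat) : (i < m.+1)%N -> (j < m.+1)%N ->
  ((if j == i then 0 else if (j < i)%N then j.+1 else j) <= m)%N.
Proof. move=> Hi Hj; repeat case: ifP => ?; lia. Qed.

Lemma sn_inj (i a b : nat) :
  (if a == i then 0 else if (a < i)%N then a.+1 else a) =
  (if b == i then 0 else if (b < i)%N then b.+1 else b) -> a = b.
Proof. repeat case: ifP => ?; lia. Qed.


Theorem mainTheorem1 (R : realFieldType) (V : vectType R) (n : nat)
  (hn : (2 <= n)%N)
  (br : {ffun 'I_n -> V} -> V) (S : {ffun 'I_n.-1 -> V} -> R^o)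
  (hGML : generalized_metric_nLeibniz br S) :
  forall v : nat -> V,
    \sum_(i < n.-1)
       br_of br (fun j => if j == 0%N then v (val i)
                          else if (j < n.-1)%N then
                                 (if (j <= val i)%N then v j.-1 else v j)
                               else v n.-1) = 0.
Proof.
case: n hn br S hGML => [|[|m]] // _ br S [_ [_ [hSl [hSs [hnd [hun hsy]]]]]] v /=.
pose g := fun (i : nat) (j : nat) => if j == 0%N then v i
                          else if (j < m.+1)%N then
                                 (if (j <= i)%N then v j.-1 else v j)
                               else v m.+1.
change (\sum_(i < m.+1) br_of br (g (val i)) = 0).
have Sof_upd : forall x (w : nat -> V),
    S_of S (fun j => if j == 0%N then x else w j)
    = S (upd [ffun j : 'I_m.+1 => w (val j)] ord0 x).
  move=> x w; rewrite /S_of /upd; congr S; apply/ffunP => j; rewrite !ffunE.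
  have -> : (j == ord0) = (val j == 0%N) by [].
  by [].
apply: hnd => w.
rewrite !Sof_upd ml_zero // ml_sum //.
set vv := fun j : nat => if j == 0%N then v m.+1 else w j.
apply: etrans (hun vv v); apply: eq_bigr => i _.
have E : forall x, upd [ffun j : 'I_m.+1 => w (val j)] ord0 x = upd [ffun j : 'I_m.+1 => vv (val j)] ord0 x.
  move=> x; apply/ffunP => j; rewrite !ffunE; case: eqP => // /eqP Hj.
  rewrite /vv; case: eqP => // Hj0; case/negP: Hj; apply/eqP/val_inj; exact: Hj0.
rewrite E -Sof_upd.
have -> : br_of br (g (val i)) = brU br (g (val i)) (vv 0%N).
  rewrite /brU /br_of; congr br; apply/ffunP => j; rewrite !ffunE /g /vv /=.
  case: ltnP => // Hj; rewrite (_ : (nat_of_ord j == 0%N) = false) //.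
  by apply/negbTE; rewrite -lt0n (leq_trans _ Hj).
rewrite (hsy (g (val i)) vv).
rewrite /vv /=.
pose sn (j : nat) := if j == val i then 0%N else if (j < val i)%N then j.+1 else j.
have sinj : injective (fun j : 'I_m.+1 => (inord (sn (val j)) : 'I_m.+1)).
  move=> a b /(congr1 (@nat_of_ord _)); rewrite !inordK; last first.
  - apply: sn_lt; exact: ltn_ord.
  - apply: sn_lt; exact: ltn_ord.
  by move=> E0; apply: val_inj; apply: sn_inj E0.
pose s := perm sinj.
rewrite /S_of -(hSs _ s); congr S; apply/ffunP => j; rewrite !ffunE permE /=.
rewrite inordK; last by apply: sn_lt; exact: ltn_ord.
rewrite /sn /g /brU /=.
have Hi := ltn_ord i; have Hj := ltn_ord j.
case E1: (nat_of_ord j == nat_of_ord i); case E2: (nat_of_ord j < nat_of_ord i)%N; rewrite /=; repeat case: ifP => ?; try done; try (by lia). all: simpl in *; try (by lia); try (congr (v _); lia). 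
Qed.
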